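(* Let $n\ge1$, $p\in\{0,\dots,n\}$, $\mathcal{X}=\{x\in\{0,1\}^n:\sum_{i=1}^n x_i=p\}$, $\hat c\in\mathbb{R}^n_{\ge0}$, and for $\lambda\in[0,1]$ let $\mathcal{U}(\lambda)=\prod_{i=1}^n[(1-\lambda)\hat c_i,(1+\lambda)\hat c_i]$. For $x\in\mathcal{X}$ define \[ reg(x,\lambda)=\max_{c\in\mathcal{U}(\lambda)}\Big(c^tx-\min_{y\in\mathcal{X}}c^ty\Big),\qquad \lambda\in[0,1], \] and let $\overline{\Lambda}(x)\subseteq[0,1]$ be the set of changepoints (breakpoints) of the piecewise linear function $reg(x,\cdot)$. Then $|\overline{\Lambda}(x)|\in\mathcal{O}(\min\{p,n-p\})$ for every fixed $x\in\mathcal{X}$, and there is a set $\overline{\Lambda}\subseteq[0,1]$ with $|\overline{\Lambda}|\in\mathcal{O}(n^2)$ such that $\overline{\Lambda}(x)\subseteq\overline{\Lambda}$ for all $x\in\mathcal{X}$.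
   Context: For fixed $x$, $reg(x,\lambda)=\max_{y\in\mathcal{X}}\big((1+\lambda)\hat c^tx-\sum_i \hat c_i(1-\lambda+2\lambda x_i)y_i\big)$ is a maximum of finitely many affine functions of $\lambda$, hence piecewise linear; its changepoints are the values of $\lambda$ where the slope changes. *)

(* Defs.v *)
From HB Require Import structures.
From mathcomp Require Import all_boot all_order all_algebra.
From mathcomp Require Import all_classical all_reals.
Set Implicit Arguments. Unset Strict Implicit. Unset Printing Implicit Defensive.
Import Order.TTheory GRing.Theory Num.Theory.
Local Open Scope ring_scope.
Local Open Scope classical_set_scope.

Definition solset (n p : nat) : {set {ffun 'I_n -> bool}} :=
  [set x : {ffun 'I_n -> bool} | (\sum_(i < n) (x i : nat))%N == p].

Definition cost (R : realType) (n : nat) (c : 'I_n -> R) (x : {ffun 'I_n -> bool}) : R :=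
  \sum_(i < n) c i * (x i)%:R.

Definition Ubox (R : realType) (n : nat) (ch : 'I_n -> R) (l : R) : set ('I_n -> R) :=
  [set c | forall i, (1 - l) * ch i <= c i /\ c i <= (1 + l) * ch i].

(* min_{y in X} c^t y (X is finite and nonempty when p <= n). *)
Definition minval (R : realType) (n p : nat) (c : 'I_n -> R) : R :=
  inf [set cost c y | y in [set y | y \in solset n p]].

Definition reg (R : realType) (n p : nat) (ch : 'I_n -> R)
    (x : {ffun 'I_n -> bool}) (l : R) : R :=
  sup [set cost c x - minval p c | c in Ubox ch l].

Definition is_changepoint (R : realType) (f : R -> R) (l0 : R) : Prop :=
  (0 < l0 < 1) /\
  ~ (exists e a b : R, 0 < e /\ forall l, `|l - l0| < e -> f l = a * l + b).

(* Main.v *)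
Require Import Defs.
From HB Require Import structures.
From mathcomp Require Import all_boot all_order all_algebra.
From mathcomp Require Import all_classical all_reals ring lra zify.
Import Order.TTheory GRing.Theory Num.Theory.
Local Open Scope ring_scope.
Set Implicit Arguments. Unset Strict Implicit.

Lemma swap_le (R : realDomainType) (I : finType) (f : I -> R) (n : nat) :
  forall A B : {set I}, #|A| = n -> #|B| = n ->
  (forall a b, a \in A -> b \in B -> f a <= f b) ->
  \sum_(i in A) f i <= \sum_(i in B) f i.
Proof.
elim: n => [|n IH] A B cA cB H.
  move/eqP: cA; rewrite cards_eq0 => /eqP ->.
  move/eqP: cB; rewrite cards_eq0 => /eqP ->.
  by rewrite !big_set0.
have /set0Pn [a aA] : A != finset.set0 by rewrite -card_gt0 cA.
have /set0Pn [b bB] : B != finset.set0 by rewrite -card_gt0 cB.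
rewrite (big_setD1 a aA) (big_setD1 b bB) /=.
apply: lerD; first exact: H.
apply: IH.
- by move/eqP: cA; rewrite (cardsD1 a A) aA add1n eqSS => /eqP.
- by move/eqP: cB; rewrite (cardsD1 b B) bB add1n eqSS => /eqP.
- by move=> a' b' /setD1P [_ ?] /setD1P [_ ?]; exact: H.
Qed.

Lemma topk (R : realDomainType) (I : finType) (f : I -> R) (s : seq I)
  (S : {set I}) (k : nat) :
  uniq s -> sorted (fun i j => f j <= f i) s -> {subset S <= s} -> #|S| = k ->
  \sum_(i in S) f i <= \sum_(i <- take k s) f i.
Proof.
move=> us ss sub cS.
have ks : (k <= size s)%N.
  rewrite -cS -(card_uniqP us); apply: subset_leq_card; apply/fintype.subsetP => i; exact: sub.
set T := [set i | i \in take k s].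
have uT : uniq (take k s) by rewrite take_uniq.
rewrite big_uniq // (eq_bigl (fun i => i \in T)); last by move=> i; rewrite inE.
have cT : #|T| = k by rewrite cardsE (card_uniqP uT) size_takel.
have rel : forall i j, i \in take k s -> j \in drop k s -> f j <= f i.
  have : pairwise (fun i j => f j <= f i) s.
    rewrite -sorted_pairwise //.
    by move=> a b c /= h1 h2; exact: le_trans h2 h1.
  move=> P i j hi hj; move: P.
  rewrite -{1}(cat_take_drop k s) pairwise_cat => /and3P [/allrelP H _ _].
  exact: H.
rewrite (big_setID T) [X in _ <= X](big_setID S) /= (finset.setIC T S).
apply: lerD => //.
have h1 := cardsID T S; have h2 := cardsID S T; rewrite finset.setIC in h2.
apply: (@swap_le _ _ _ #|S :\: T|) => //.
  by apply/eqP; rewrite -(eqn_add2l #|S :&: T|) h1 h2 cS cT.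
move=> a b /setDP [aS aT] /setDP [bT bS].
apply: rel; first by move: bT; rewrite inE.
have : a \in s by exact: sub.
rewrite -{1}(cat_take_drop k s) mem_cat => /orP [] //.
by move: aT; rewrite inE => /negP.
Qed.

Lemma pos_near (R : realType) (u w l0 : R) : 0 < u * l0 + w ->
  exists2 e : R, 0 < e & forall l, `|l - l0| < e -> 0 <= u * l + w.
Proof.
move=> h; set e := (u * l0 + w) / (`|u| + 1).
have hu : 0 < `|u| + 1 by rewrite ltr_pwDr // normr_ge0.
have he : 0 < e by rewrite divr_gt0.
exists e => // l hl.
have D : (`|u| + 1) * e = u * l0 + w by rewrite /e mulrC divfK // gt_eqF.
have A : - (`|u| * `|l - l0|) <= u * (l - l0) by apply: lerNnormlW; rewrite normrM.
have B : `|u| * `|l - l0| <= `|u| * e by apply: ler_wpM2l => //; exact: ltW.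
have C : `|u| * e <= (`|u| + 1) * e by rewrite mulrDl mul1r lerDl ltW.
have E : u * (l - l0) = u * l - u * l0 by ring.
lra.
Qed.

Arguments pos_near {R u w l0}.

Lemma fin_near (R : realType) (l0 : R) (m : nat) (P : nat -> R -> Prop) :
  (forall t, (t < m)%N -> exists2 e : R, 0 < e & forall l, `|l - l0| < e -> P t l) ->
  exists2 e : R, 0 < e & forall l, `|l - l0| < e -> forall t, (t < m)%N -> P t l.
Proof.
elim: m => [|m IH] H.
  by exists 1 => // l _ t.
have [e1 e1p H1] := IH (fun t ht => H t (ltnW ht)).
have [e2 e2p H2] := H m (ltnSn m).
exists (Num.min e1 e2); first by rewrite lt_min e1p e2p.
move=> l; rewrite lt_min => /andP [h1 h2] t; rewrite ltnS leq_eqVlt => /orP [/eqP -> | ht].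
  exact: H2.
exact: H1.
Qed.

Lemma nochange (R : realType) (g : R -> R) (m : nat) (u w : nat -> R) (l0 : R) :
  (forall l, 0 < l < 1 ->
     (forall k, (k <= m)%N -> \sum_(0 <= t < k) (u t * l + w t) <= g l) /\
     exists2 k, (k <= m)%N & \sum_(0 <= t < k) (u t * l + w t) = g l) ->
  (forall s t, (s <= t)%N -> (t < m)%N -> u t * l0 + w t <= u s * l0 + w s) ->
  is_changepoint g l0 ->
  exists2 t, (t < m)%N & (u t * l0 + w t = 0 /\ u t != 0).
Proof.
move=> Hg Hmono [/andP [l0p l0l1] Hna].
case: (pselect (exists2 t, (t < m)%N & (u t * l0 + w t = 0 /\ u t != 0))) => // H.
exfalso; apply: Hna.
pose d t l := u t * l + w t.
have Hz : forall t, (t < m)%N -> d t l0 = 0 -> u t = 0.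
  move=> t ht hd; apply/eqP; apply/negPn/negP => hu; apply: H; by exists t.
have [k0 [k0m Hlt Hge]] : exists k0, [/\ (k0 <= m)%N,
    (forall t, (t < k0)%N -> 0 < d t l0) &
    (forall t, (k0 <= t)%N -> (t < m)%N -> d t l0 <= 0)].
  case: (pselect (exists t, (t < m)%N && (d t l0 <= 0))) => [ex|nex].
    case: (ex_minnP ex) => k0 /andP [k0m dk0] mink0.
    exists k0; split.
    - exact: ltnW.
    - move=> t tk0; rewrite ltNge; apply/negP => dt.
      have := mink0 t; rewrite (ltn_trans tk0 k0m) dt => /(_ isT).
      by rewrite leqNgt tk0.
    - move=> t kt tm; apply: le_trans (Hmono _ _ kt tm) dk0.
  exists m; split; [done | | by move=> t mt tm; rewrite leqNgt tm in mt].
  move=> t tm.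
  rewrite ltNge; apply/negP => dt; apply: nex; exists t; by rewrite tm dt.
have [e ep He] : exists2 e : R, 0 < e & forall l, `|l - l0| < e ->
   forall t, (t < m)%N -> ((t < k0)%N -> 0 <= d t l) /\ ((k0 <= t)%N -> d t l <= 0).
  apply: fin_near => t tm; case: (ltnP t k0) => tk.
    have [e ep He] := pos_near (Hlt t tk).
    exists e => // l hl; split => [_|]; first exact: He.
    by [].
  have := Hge t tk tm; rewrite le_eqVlt => /orP [/eqP d0 | dneg].
    exists 1 => // l _; split; first by [].
    have ut := Hz t tm d0.
    by move=> _; move: d0; rewrite /d ut !mul0r !add0r => ->.
  have : 0 < (- u t) * l0 + (- w t) by rewrite mulNr -opprD oppr_gt0.
  move=> /pos_near [e ep He].
  exists e => // l hl; split; first by [].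
  move=> _; have := He l hl; rewrite mulNr -opprD oppr_ge0 //.
exists (Num.min e (Num.min l0 (1 - l0))).
exists (\sum_(0 <= t < k0) u t), (\sum_(0 <= t < k0) w t).
split; first by rewrite !lt_min ep l0p subr_gt0 l0l1.
move=> l; rewrite !lt_min => /and3P [hle hl1 hl2].
have l01 : 0 < l < 1.
  move: hl1 hl2; rewrite !ltr_norml => /andP [a1 _] /andP [_ a2].
  apply/andP; split; lra.
have [Hle [k km Hk]] := Hg l l01.
have Gmax : \sum_(0 <= t < k) d t l <= \sum_(0 <= t < k0) d t l.
  case: (leqP k k0) => kk.
    rewrite [X in _ <= X](@big_cat_nat _ _ _ k) //= lerDl.
    rewrite big_nat_cond; apply: sumr_ge0 => t /andP [/andP [_ tk0] _].
    by case: (He l hle t (leq_trans tk0 k0m)) => /(_ tk0).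
  rewrite [X in X <= _](@big_cat_nat _ _ _ k0) //= ?gerDl; last exact: ltnW.
  rewrite -oppr_ge0 -sumrN big_nat_cond.
  apply: sumr_ge0 => t /andP [/andP [kt tk] _].
  case: (He l hle t (leq_trans tk km)) => _ /(_ kt); by rewrite oppr_ge0.
have -> : g l = \sum_(0 <= t < k0) d t l.
  apply/le_anti; rewrite Hle // andbT -Hk; exact: Gmax.
by rewrite /d big_split /= mulr_suml.
Qed.

Definition Xs (n : nat) (x : {ffun 'I_n -> bool}) : {set 'I_n} := [set i | x i].
Definition ixs (R : realType) (n : nat) (ch : 'I_n -> R) (x : {ffun 'I_n -> bool}) :=
  sort (fun i j : 'I_n => ch j <= ch i) (enum (Xs x)).
Definition jxs (R : realType) (n : nat) (ch : 'I_n -> R) (x : {ffun 'I_n -> bool}) :=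
  sort (fun i j : 'I_n => ch i <= ch j) (enum (~: Xs x)).
Definition av (R : realType) (n : nat) (ch : 'I_n -> R) x t := nth 0 (map ch (ixs ch x)) t.
Definition bv (R : realType) (n : nat) (ch : 'I_n -> R) x t := nth 0 (map ch (jxs ch x)) t.
Definition Gk (R : realType) (n : nat) (ch : 'I_n -> R) x k (l : R) :=
  \sum_(0 <= t < k) ((av ch x t + bv ch x t) * l + (av ch x t - bv ch x t)).

Lemma sum_card (n : nat) (x : {ffun 'I_n -> bool}) :
  (\sum_(i < n) (x i : nat))%N = #|Xs x|.
Proof.
rewrite -sum1_card [RHS]big_mkcond /=; apply: eq_bigr => i _; rewrite inE.
by case: (x i).
Qed.

Lemma solsetE (n p : nat) (x : {ffun 'I_n -> bool}) :
  (x \in solset n p) = (#|Xs x| == p).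
Proof. by rewrite inE sum_card. Qed.

Lemma cost_set (R : realType) (n : nat) (c : 'I_n -> R) x :
  cost c x = \sum_(i in Xs x) c i.
Proof.
rewrite /cost [RHS]big_mkcond /=; apply: eq_bigr => i _; rewrite inE.
by case: (x i); rewrite ?mulr1 ?mulr0.
Qed.

Lemma ixs_uniq (R : realType) n (ch : 'I_n -> R) x : uniq (ixs ch x).
Proof. by rewrite sort_uniq enum_uniq. Qed.
Lemma jxs_uniq (R : realType) n (ch : 'I_n -> R) x : uniq (jxs ch x).
Proof. by rewrite sort_uniq enum_uniq. Qed.
Lemma ixs_mem (R : realType) n (ch : 'I_n -> R) x i : (i \in ixs ch x) = x i.
Proof. by rewrite mem_sort mem_enum inE. Qed.
Lemma jxs_mem (R : realType) n (ch : 'I_n -> R) x i : (i \in jxs ch x) = ~~ x i.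
Proof. by rewrite mem_sort mem_enum !inE. Qed.
Lemma ixs_sorted (R : realType) n (ch : 'I_n -> R) x :
  sorted (fun i j => ch j <= ch i) (ixs ch x).
Proof. by apply: sort_sorted => i j; exact: le_total. Qed.
Lemma jxs_sorted (R : realType) n (ch : 'I_n -> R) x :
  sorted (fun i j => ch i <= ch j) (jxs ch x).
Proof. by apply: sort_sorted => i j; exact: le_total. Qed.
Lemma ixs_size (R : realType) n (ch : 'I_n -> R) x : size (ixs ch x) = #|Xs x|.
Proof. by rewrite size_sort -cardE. Qed.
Lemma jxs_size (R : realType) n (ch : 'I_n -> R) x : size (jxs ch x) = (n - #|Xs x|)%N.
Proof.
rewrite size_sort -cardE; have := cardsC (Xs x); rewrite card_ord => h.
move: h; set a := #|Xs x|; set b := #|~: Xs x|; move=> h; lia.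
Qed.

Lemma sum_take (R : realType) n (ch : 'I_n -> R) (s : seq 'I_n) k :
  (k <= size s)%N ->
  \sum_(i <- take k s) ch i = \sum_(0 <= t < k) nth 0 (map ch s) t.
Proof.
move=> ks.
have -> : \sum_(i <- take k s) ch i = \sum_(v <- map ch (take k s)) v by rewrite big_map.
rewrite (big_nth 0) size_map size_takel //.
apply: eq_big_nat => t /andP [_ tk].
by rewrite map_take nth_take.
Qed.

Lemma GkE (R : realType) n (ch : 'I_n -> R) x k l :
  (k <= #|Xs x|)%N -> (k <= n - #|Xs x|)%N ->
  Gk ch x k l = (1 + l) * \sum_(i <- take k (ixs ch x)) ch i
              - (1 - l) * \sum_(i <- take k (jxs ch x)) ch i.
Proof.
move=> k1 k2.
rewrite !sum_take ?ixs_size ?jxs_size // !mulr_sumr -sumrB /Gk.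
by apply: eq_bigr => t _; rewrite /av /bv; ring.
Qed.

Lemma regU (R : realType) (n p : nat) (ch : 'I_n -> R) x y (l : R) (c : 'I_n -> R) :
  x \in solset n p -> y \in solset n p -> (forall i, 0 <= ch i) -> 0 <= l <= 1 ->
  Ubox ch l c ->
  exists2 k, (k <= minn p (n - p))%N & cost c x - cost c y <= Gk ch x k l.
Proof.
rewrite !solsetE => /eqP cX /eqP cY hch /andP [l0 l1] hc.
set X := Xs x; set Y := Xs y.
rewrite !cost_set -/X -/Y (big_setID Y) [X in _ - X](big_setID X) /=.
rewrite (finset.setIC Y X).
set k := #|X :\: Y|.
have h1 := cardsID Y X; have h2 := cardsID X Y; rewrite finset.setIC in h2.
have kYX : #|Y :\: X| = k.
  by apply/eqP; rewrite -(eqn_add2l #|X :&: Y|) h1 h2 cX cY.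
have kp : (k <= p)%N by rewrite -cX; apply: subset_leq_card; exact: subsetDl.
have knp : (k <= n - p)%N.
  rewrite -kYX -cX -(jxs_size ch x) -/X -(card_uniqP (jxs_uniq ch x)).
  apply: subset_leq_card; apply/fintype.subsetP => i /setDP [_].
  by rewrite jxs_mem inE.
exists k; first by rewrite leq_min kp knp.
rewrite GkE -/X ?cX //.
have A : \sum_(i in X :\: Y) c i <= (1 + l) * \sum_(i in X :\: Y) ch i.
  by rewrite mulr_sumr; apply: ler_sum => i _; case: (hc i).
have B : (1 - l) * \sum_(i in Y :\: X) ch i <= \sum_(i in Y :\: X) c i.
  by rewrite mulr_sumr; apply: ler_sum => i _; case: (hc i).
have C : \sum_(i in X :\: Y) ch i <= \sum_(i <- take k (ixs ch x)) ch i.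
  apply: topk => //; [exact: ixs_uniq | exact: ixs_sorted |].
  by move=> i /setDP [+ _]; rewrite ixs_mem inE.
have D : \sum_(i <- take k (jxs ch x)) ch i <= \sum_(i in Y :\: X) ch i.
  rewrite -lerN2 -!sumrN; apply: topk => //; first exact: jxs_uniq.
    by apply: sub_sorted (jxs_sorted ch x) => i j /=; rewrite lerN2.
  by move=> i /setDP [_]; rewrite jxs_mem inE.
have C' := ler_wpM2l (_ : 0 <= 1 + l) C.
have D' := ler_wpM2l (_ : 0 <= 1 - l) D.
have E1 : 0 <= 1 + l by lra.
have E2 : 0 <= 1 - l by lra.
have := C' E1; have := D' E2; lra.
Qed.

Definition cstar (R : realType) (n : nat) (ch : 'I_n -> R) (x : {ffun 'I_n -> bool}) (l : R) :=
  fun i => if x i then (1 + l) * ch i else (1 - l) * ch i.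

Lemma cstar_box (R : realType) (n : nat) (ch : 'I_n -> R) x (l : R) :
  0 <= l -> (forall i, 0 <= ch i) -> Ubox ch l (cstar ch x l).
Proof.
move=> l0 hch i; rewrite /cstar; have := hch i; case: (x i) => h; split; nra.
Qed.

Lemma abbc (R : realType) (a b c : R) : (a + b) - (b + c) = a - c.
Proof. ring. Qed.

Lemma regL (R : realType) (n p : nat) (ch : 'I_n -> R) x (l : R) k :
  x \in solset n p -> (k <= minn p (n - p))%N ->
  exists2 y, y \in solset n p &
    cost (cstar ch x l) x - cost (cstar ch x l) y = Gk ch x k l.
Proof.
rewrite solsetE => /eqP cX; rewrite leq_min => /andP [kp knp].
set X := Xs x.
set T1 := [set i | i \in take k (ixs ch x)].
set T2 := [set i | i \in take k (jxs ch x)].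
have hT1 : forall i, i \in take k (ixs ch x) -> x i.
  by move=> i /mem_take; rewrite ixs_mem.
have hT2 : forall i, i \in take k (jxs ch x) -> ~~ x i.
  by move=> i /mem_take; rewrite jxs_mem.
set Y := (X :\: T1) :|: T2.
have XsY : Xs [ffun i => i \in Y] = Y by apply/setP => i; rewrite inE ffunE.
have cT1 : #|T1| = k.
  by rewrite cardsE (card_uniqP (take_uniq _ (ixs_uniq ch x))) size_takel // ixs_size -/X cX.
have cT2 : #|T2| = k.
  by rewrite cardsE (card_uniqP (take_uniq _ (jxs_uniq ch x))) size_takel // jxs_size -/X cX.
have YX1 : Y :&: X = X :\: T1.
  apply/setP => i; rewrite !inE; have := hT1 i; have := hT2 i.
  by case: (x i); case: (i \in take k (ixs ch x)); case: (i \in take k (jxs ch x)) => //= /(_ isT).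
have YX2 : Y :\: X = T2.
  apply/setP => i; rewrite !inE; have := hT1 i; have := hT2 i.
  by case: (x i); case: (i \in take k (ixs ch x)); case: (i \in take k (jxs ch x)) => //= /(_ isT).
have XT : X :&: T1 = T1.
  apply/setP => i; rewrite !inE; have := hT1 i.
  by case: (x i); case: (i \in take k (ixs ch x)) => //= /(_ isT).
exists [ffun i => i \in Y].
- rewrite solsetE XsY; have := cardsID X Y; rewrite YX1 YX2 => <-.
  have := cardsID T1 X; rewrite XT cX cT1 cT2 => h.
  by rewrite addnC h.
rewrite !cost_set -/X XsY (big_setID T1) [X in _ - X](big_setID X) /= XT YX1 YX2.
rewrite abbc GkE -/X ?cX //.
have -> : \sum_(i <- take k (ixs ch x)) ch i = \sum_(i in T1) ch i.
  by rewrite big_uniq ?take_uniq ?ixs_uniq //; apply: eq_bigl => i; rewrite inE.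
have -> : \sum_(i <- take k (jxs ch x)) ch i = \sum_(i in T2) ch i.
  by rewrite big_uniq ?take_uniq ?jxs_uniq //; apply: eq_bigl => i; rewrite inE.
rewrite !mulr_sumr; congr (_ - _); apply: eq_bigr => i; rewrite inE /cstar.
  by move/hT1 => ->.
by move/hT2 => /negbTE ->.
Qed.

Lemma argmax (R : realDomainType) (F : nat -> R) m :
  exists2 k, (k <= m)%N & forall j, (j <= m)%N -> F j <= F k.
Proof.
elim: m => [|m [k km Hk]].
  by exists 0 => // j; rewrite leqn0 => /eqP ->.
case: (leP (F m.+1) (F k)) => h.
  exists k; first exact: leqW.
  by move=> j; rewrite leq_eqVlt ltnS => /orP [/eqP -> // | ]; exact: Hk.
exists m.+1 => // j; rewrite leq_eqVlt ltnS => /orP [/eqP -> // | /Hk hj].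
exact: le_trans hj (ltW h).
Qed.

Lemma regC (R : realType) (n p : nat) (ch : 'I_n -> R) x (l : R) :
  x \in solset n p -> (forall i, 0 <= ch i) -> 0 <= l <= 1 ->
  (forall k, (k <= minn p (n - p))%N -> Gk ch x k l <= reg p ch x l) /\
  exists2 k, (k <= minn p (n - p))%N & Gk ch x k l = reg p ch x l.
Proof.
move=> hx hch hl.
have [ks ksm Hks] := argmax (fun k => Gk ch x k l) (minn p (n - p)).
suff -> : reg p ch x l = Gk ch x ks l by split => //; exists ks.
set V := Gk ch x ks l.
have lbd : forall c, Ubox ch l c ->
    lbound [set cost c y | y in [set y | y \in solset n p]] (cost c x - V).
  move=> c hc z [y hy <-].
  have [k km hk] := regU hx hy hch hl hc.
  have := Hks k km; rewrite /= -/V; lra.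
have ub : forall c, Ubox ch l c -> cost c x - minval p c <= V.
  move=> c hc; have : cost c x - V <= minval p c.
    by apply: lb_le_inf; [by exists (cost c x); exists x | exact: lbd].
  lra.
have [y hy hyV] := @regL R n p ch x l ks hx ksm.
have l0 : 0 <= l by case/andP: hl.
have cb := @cstar_box R n ch x l l0 hch.
have mv : minval p (cstar ch x l) = cost (cstar ch x l) y.
  apply/le_anti/andP; split.
    rewrite /minval; apply: ge_inf; last by exists y.
    by exists (cost (cstar ch x l) x - V); exact: lbd.
  rewrite /minval; apply: lb_le_inf; first by exists (cost (cstar ch x l) x); exists x.
  move=> z hz; have := lbd _ cb z hz; rewrite /V -hyV; lra.
rewrite /reg; apply/le_anti/andP; split.
  apply: ge_sup; last by move=> z [c hc <-]; exact: ub.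
  by exists (cost (cstar ch x l) x - minval p (cstar ch x l)); exists (cstar ch x l).
apply: ub_le_sup.
  by exists V; move=> z [c hc <-]; exact: ub.
by exists (cstar ch x l) => //; rewrite mv hyV.
Qed.

Lemma cp_root (R : realType) (n p : nat) (ch : 'I_n -> R) x (l : R) :
  (forall i, 0 <= ch i) -> x \in solset n p -> is_changepoint (reg p ch x) l ->
  exists2 t, (t < minn p (n - p))%N &
    ((av ch x t + bv ch x t) * l + (av ch x t - bv ch x t) = 0 /\
     av ch x t + bv ch x t != 0).
Proof.
move=> hch hx hcp; have [/andP [l0 l1] _] := hcp.
have cX : #|Xs x| = p by move: hx; rewrite solsetE => /eqP.
apply: (@nochange R (reg p ch x) (minn p (n - p))
   (fun t => av ch x t + bv ch x t) (fun t => av ch x t - bv ch x t) l) => //.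
  move=> l' /andP [l'0 l'1].
  have := @regC R n p ch x l' hx hch; rewrite (ltW l'0) (ltW l'1) => /(_ isT).
  by rewrite /Gk.
move=> s t st; rewrite leq_min => /andP [tp tnp].
have tr : transitive (fun u v : R => v <= u) by move=> ? ? ? h1 h2; exact: le_trans h2 h1.
have rf : reflexive (fun u v : R => v <= u) by move=> ?; exact: lexx.
have tr' : transitive (fun u v : R => u <= v) by move=> ? ? ? h1 h2; exact: le_trans h1 h2.
have rf' : reflexive (fun u v : R => u <= v) by move=> ?; exact: lexx.
have S1 : sorted (fun u v : R => v <= u) (map ch (ixs ch x)).
  by rewrite sorted_map; exact: ixs_sorted.
have S2 : sorted (fun u v : R => u <= v) (map ch (jxs ch x)).
  by rewrite sorted_map; exact: jxs_sorted.
have ha : av ch x t <= av ch x s.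
  apply: (sorted_leq_nth tr rf 0 S1) => //; rewrite !inE size_map ixs_size cX //.
  exact: leq_ltn_trans st tp.
have hb : bv ch x s <= bv ch x t.
  apply: (sorted_leq_nth tr' rf' 0 S2) => //; rewrite !inE size_map jxs_size cX //.
  exact: leq_ltn_trans st tnp.
nra.
Qed.

Unset Implicit Arguments.

Theorem theorem4 (R : realType) :
  (exists C : nat, forall (n p : nat) (ch : 'I_n -> R) (x : {ffun 'I_n -> bool}),
      (0 < n)%N -> (p <= n)%N -> (forall i, 0 <= ch i) -> x \in solset n p ->
      exists s : seq R, (size s <= C * minn p (n - p))%N /\
        forall l : R, is_changepoint (reg p ch x) l -> l \in s)
  /\
  (exists C : nat, forall (n p : nat) (ch : 'I_n -> R),
      (0 < n)%N -> (p <= n)%N -> (forall i, 0 <= ch i) ->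
      exists s : seq R, (size s <= C * n ^ 2)%N /\
        (forall l, l \in s -> 0 <= l <= 1) /\
        forall x : {ffun 'I_n -> bool}, x \in solset n p ->
          forall l : R, is_changepoint (reg p ch x) l -> l \in s).
Proof.
split.
  exists 1%N => n p ch x hn hp hch hx.
  exists [seq - (av ch x t - bv ch x t) / (av ch x t + bv ch x t) | t <- iota 0 (minn p (n - p))].
  split; first by rewrite size_map size_iota mul1n.
  move=> l hcp.
  have [t tm [h0 hu]] := cp_root hch hx hcp.
  apply/mapP; exists t; first by rewrite mem_iota.
  apply: (mulIf hu); rewrite divfK //; lra.
exists 1%N => n p ch hn hp hch.
exists [seq l <- [seq (ch j - ch i) / (ch i + ch j) | i <- enum 'I_n, j <- enum 'I_n]
         | 0 <= l <= 1].
split.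
  rewrite size_filter mul1n -mulnn; apply: leq_trans (count_size _ _) _.
  by rewrite size_allpairs size_enum_ord.
split; first by move=> l; rewrite mem_filter => /andP [].
move=> x hx l hcp; have [/andP [l0 l1] _] := hcp.
have cX : #|Xs x| = p by move: hx; rewrite solsetE => /eqP.
have [t tm [h0 hu]] := cp_root hch hx hcp.
move: tm; rewrite leq_min => /andP [tp tnp].
have /mapP [i _ hi] : av ch x t \in map ch (ixs ch x).
  by apply: mem_nth; rewrite size_map ixs_size cX.
have /mapP [j _ hj] : bv ch x t \in map ch (jxs ch x).
  by apply: mem_nth; rewrite size_map jxs_size cX.
rewrite hi hj in h0 hu.
rewrite mem_filter (ltW l0) (ltW l1) /=.
have -> : l = (ch j - ch i) / (ch i + ch j).
  apply: (mulIf hu); rewrite divfK //; lra.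
by apply: allpairs_f; rewrite mem_enum.
Qed.
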